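(* Let $p$ be a prime, $K\in\{\mathbb Z_{(p)},\mathbb Z_p\}$, $F$ a field containing $K$, $G=\langle a\rangle\cong C_{p^2}$, $\Phi(x)=x^{p-1}+\dots+x+1$, and for $0\leq i\leq p-1$ let $Y_i$ be the $KC_{p^2}$-submodule of $KC_{p^2}$ generated by $\Phi(a)$ and $(a-1)^i$. Then for every $1$-cocycle $T:C_{p^2}\to\widehat{Y_i}$ the group $\mathrm{Crys}(C_{p^2};Y_i;T)$ contains an element of order $p$.
   Context: $FM=F\otimes_KM$, $\widehat M=FM/M$ with $g(x+M)=gx+M$; a $1$-cocycle is $T:G\to\widehat M$ with $T(gh)=gT(h)+T(g)$. $\mathrm{Crys}(G;M;T)=\{(g,x):g\in G,\ x\in FM,\ x+M=T(g)\}$ with $(g,x)(g',x')=(gg',g'x+x')$. *)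

(* Defs.v *)
From HB Require Import structures.
From mathcomp Require Import all_boot all_order all_algebra.
Unset Printing Implicit Defensive.
Import Order.TTheory GRing.Theory Num.Theory.
Local Open Scope ring_scope.

Section Defs.
Variable F : fieldType.

Definition subring_of (K : pred F) :=
  [/\ K 0, K 1, {in K &, forall x y, K (x - y)} & {in K &, forall x y, K (x * y)}].

Definition pmultK (K : pred F) (p n : nat) (x : F) :=
  exists2 y, K y & x = (p%:R ^+ n) * y.

Definition is_Zloc_p (p : nat) (K : pred F) :=
  [pchar F] =i pred0 /\
  forall x, K x <-> exists m s : int, ~~ (p%:Z %| s)%Z /\ x = m%:~R / s%:~R.

(** K is a subring of F isomorphic to the p-adic integers Z_p = lim Z/p^n Z:
    the canonical maps K/p^nK <- Z/p^nZ are isomorphisms and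
    K -> lim K/p^nK is bijective (separated and complete). *)
Definition is_Zp (p : nat) (K : pred F) :=
  [/\ subring_of K,
      forall n x, K x -> exists m : int, pmultK K p n (x - m%:~R),
      forall n (m : int), pmultK K p n m%:~R -> (p%:Z ^+ n %| m)%Z,
      forall x, K x -> (forall n, pmultK K p n x) -> x = 0 &
      forall c : nat -> int, (forall n, (p%:Z ^+ n %| c n.+1 - c n)%Z) ->
        exists2 x, K x & forall n, pmultK K p n (x - (c n)%:~R)].

(** Group ring F C_N modelled as F[X]/(X^N - 1), generator a = X. *)
Definition eqFG (N : nat) (x y : {poly F}) : Prop := ('X^N - 1) %| (x - y).

Definition Phi (p : nat) : {poly F} := \sum_(j < p) 'X^j.

(** all coefficients in K, i.e. a representative of an element of K C_N *)
Definition polyK (K : pred F) (q : {poly F}) := forall j, K q`_j.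

Definition inY (p i : nat) (K : pred F) (q : {poly F}) :=
  exists u v, [/\ polyK K u, polyK K v &
                  eqFG (p ^ 2) q (u * Phi p + v * ('X - 1) ^+ i)].

Definition inFY (p i : nat) (q : {poly F}) :=
  exists u v : {poly F}, eqFG (p ^ 2) q (u * Phi p + v * ('X - 1) ^+ i).

(** C_{p^2} = <a> is modelled as 'Z_(p^2) (written additively, a <-> 1);
    g acts on FG by multiplication by X^g.  A 1-cocycle with values in
    F Y_i / Y_i is represented by representatives T g in F Y_i; the
    cocycle identity holds modulo Y_i. *)
Definition is_cocycle (p i : nat) (K : pred F) (T : 'Z_(p ^ 2) -> {poly F}) :=
  (forall g, inFY p i (T g)) /\
  (forall g h, inY p i K (T (g + h) - ('X^g * T h + T g))).

Definition in_crys (p i : nat) (K : pred F) (T : 'Z_(p ^ 2) -> {poly F})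
  (u : 'Z_(p ^ 2) * {poly F}) := inFY p i u.2 /\ inY p i K (u.2 - T u.1).

Definition crys_mul (p : nat) (u v : 'Z_(p ^ 2) * {poly F}) : 'Z_(p ^ 2) * {poly F} :=
  (u.1 + v.1, 'X^(v.1) * u.2 + v.2).

Definition crys_one (p : nat) : 'Z_(p ^ 2) * {poly F} := (0, 0).

Definition crys_exp (p : nat) (u : 'Z_(p ^ 2) * {poly F}) (n : nat) :=
  iter n (fun w => crys_mul p w u) (crys_one p).

Definition crys_eq (p : nat) (u v : 'Z_(p ^ 2) * {poly F}) :=
  u.1 = v.1 /\ eqFG (p ^ 2) u.2 v.2.

Definition crys_order (p : nat) (u : 'Z_(p ^ 2) * {poly F}) (n : nat) :=
  crys_eq p (crys_exp p u n) (crys_one p) /\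
  forall k, (0 < k < n)%N -> ~ crys_eq p (crys_exp p u k) (crys_one p).

End Defs.

Arguments subring_of {F} K.
Arguments pmultK {F} K p n x.
Arguments is_Zloc_p {F} p K.
Arguments is_Zp {F} p K.
Arguments eqFG {F} N x y.
Arguments Phi {F} p.
Arguments polyK {F} K q.
Arguments inY {F} p i K q.
Arguments inFY {F} p i q.
Arguments is_cocycle {F} p i K T.
Arguments in_crys {F} p i K T u.
Arguments crys_mul {F} p u v.
Arguments crys_one {F} p.
Arguments crys_exp {F} p u n.
Arguments crys_eq {F} p u v.
Arguments crys_order {F} p u n.

(* Main.v *)
Require Import Defs.
From HB Require Import structures.
From mathcomp Require Import all_boot all_order all_algebra.
From mathcomp Require Import ring.
Import GRing.Theory.
Set Implicit Arguments.
Unset Strict Implicit.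
Local Open Scope ring_scope.

Lemma intr_neq0_char0 (F : fieldType) (s : int) :
  [pchar F] =i pred0 -> s != 0 -> (s%:~R : F) != 0.
Proof.
move=> /pcharf0P h; case: s => n.
  by move=> hn; rewrite /= h.
by move=> _; rewrite NegzE mulrNz oppr_eq0 h.
Qed.

Lemma Zloc_subring (F : fieldType) (p : nat) (K : pred F) :
  prime p -> is_Zloc_p p K -> subring_of K.
Proof.
move=> pp [hc hK].
have s0 : forall s : int, ~~ (p%:Z %| s)%Z -> (s%:~R : F) != 0.
  move=> s hs; apply: intr_neq0_char0 => //; apply: contra hs => /eqP->.
  exact: dvdz0.
have ndvd : forall s s' : int, ~~ (p%:Z %| s)%Z -> ~~ (p%:Z %| s')%Z ->
    ~~ (p%:Z %| s * s')%Z.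
  move=> s s'; rewrite !dvdzE abszM Euclid_dvdM //.
  by move=> /negPf-> /negPf->.
split.
- apply/hK; exists 0%Z, 1%Z; split; last by rewrite mul0r.
  by rewrite dvdzE /= dvdn1 neq_ltn prime_gt1 ?orbT.
- apply/hK; exists 1%Z, 1%Z; split; last by rewrite divr1.
  by rewrite dvdzE /= dvdn1 neq_ltn prime_gt1 ?orbT.
- move=> x y /hK [m [s [hs ->]]] /hK [m' [s' [hs' ->]]].
  apply/hK; exists (m * s' - m' * s)%R, (s * s')%R; split; first exact: ndvd.
  have := s0 _ hs; have := s0 _ hs'.
  rewrite !intrM intrB !intrM => h1 h2. by field; apply/andP.
- move=> x y /hK [m [s [hs ->]]] /hK [m' [s' [hs' ->]]].
  apply/hK; exists (m * m')%R, (s * s')%R; split; first exact: ndvd.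
  have := s0 _ hs; have := s0 _ hs'.
  rewrite !intrM => h1 h2. by field; apply/andP.
Qed.

Section Closure.
Variables (F : fieldType) (K : pred F).
Hypothesis hS : subring_of K.

Lemma K0 : K 0. Proof. by case: hS. Qed.
Lemma K1 : K 1. Proof. by case: hS. Qed.
Lemma KB x y : K x -> K y -> K (x - y). Proof. by case: hS => _ _ h _; apply: h. Qed.
Lemma KM x y : K x -> K y -> K (x * y). Proof. by case: hS => _ _ _ h; apply: h. Qed.
Lemma KN x : K x -> K (- x). Proof. by move=> h; rewrite -sub0r; apply: KB => //; apply: K0. Qed.
Lemma KD x y : K x -> K y -> K (x + y).
Proof. by move=> hx hy; rewrite -[y]opprK; apply: KB => //; apply: KN. Qed.
Lemma Knat (b : bool) : K b%:R. Proof. by case: b; [apply: K1 | apply: K0]. Qed.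

Lemma Ksum (I : Type) (r : seq I) (P : pred I) (f : I -> F) :
  (forall i, P i -> K (f i)) -> K (\sum_(i <- r | P i) f i).
Proof.
move=> h; elim/big_rec: _ => [|i x Pi Kx]; first exact: K0.
by apply: KD => //; apply: h.
Qed.

Lemma polyK0 : polyK K 0. Proof. by move=> j; rewrite coef0; apply: K0. Qed.
Lemma polyKC c : K c -> polyK K c%:P.
Proof. by move=> hc j; rewrite coefC; case: eqP => _ //; apply: K0. Qed.
Lemma polyKD u v : polyK K u -> polyK K v -> polyK K (u + v).
Proof. by move=> hu hv j; rewrite coefD; apply: KD. Qed.
Lemma polyKB u v : polyK K u -> polyK K v -> polyK K (u - v).
Proof. by move=> hu hv j; rewrite coefB; apply: KB. Qed.
Lemma polyKN u : polyK K u -> polyK K (- u).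
Proof. by move=> hu j; rewrite coefN; apply: KN. Qed.
Lemma polyKM u v : polyK K u -> polyK K v -> polyK K (u * v).
Proof. by move=> hu hv j; rewrite coefM; apply: Ksum => k _; apply: KM. Qed.
Lemma polyKXn k : polyK K 'X^k.
Proof. by move=> j; rewrite coefXn; apply: Knat. Qed.
Lemma polyKX : polyK K 'X.
Proof. by move=> j; rewrite coefX; apply: Knat. Qed.
Lemma polyK1 : polyK K 1.
Proof. by move=> j; rewrite coef1; apply: Knat. Qed.
Lemma polyKexp u k : polyK K u -> polyK K (u ^+ k).
Proof.
move=> hu; elim: k => [|k ih]; first exact: polyK1.
by rewrite exprS; apply: polyKM.
Qed.
Lemma polyKsum (I : Type) (r : seq I) (P : pred I) (f : I -> {poly F}) :
  (forall i, P i -> polyK K (f i)) -> polyK K (\sum_(i <- r | P i) f i).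
Proof.
move=> h; elim/big_rec: _ => [|i x Pi Kx]; first exact: polyK0.
by apply: polyKD => //; apply: h.
Qed.
Lemma polyKPhi m : polyK K (Phi m).
Proof. by rewrite /Phi; apply: polyKsum => k _; apply: polyKXn. Qed.
Lemma polyKt i : polyK K (('X - 1) ^+ i).
Proof. by apply: polyKexp; apply: polyKB; [apply: polyKX | apply: polyK1]. Qed.

Variables (p i : nat).

Definition Rof u v : {poly F} := u * Phi p + v * ('X - 1) ^+ i.

Lemma inY_eq q q' : inY p i K q -> eqFG (p ^ 2) q q' -> inY p i K q'.
Proof.
move=> [u [v [hu hv he]]] hq; exists u, v; split => //.
rewrite /eqFG in he hq *.
have -> : q' - (u * Phi p + v * ('X - 1) ^+ i) =
   (q - (u * Phi p + v * ('X - 1) ^+ i)) - (q - q') by ring.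
exact: dvdp_sub.
Qed.

Lemma inYD q q' : inY p i K q -> inY p i K q' -> inY p i K (q + q').
Proof.
move=> [u [v [hu hv he]]] [u' [v' [hu' hv' he']]].
exists (u + u'), (v + v'); split; [exact: polyKD | exact: polyKD |].
rewrite /eqFG in he he' *.
have -> : q + q' - ((u + u') * Phi p + (v + v') * ('X - 1) ^+ i) =
   (q - (u * Phi p + v * ('X - 1) ^+ i)) + (q' - (u' * Phi p + v' * ('X - 1) ^+ i)) by ring.
exact: dvdp_add.
Qed.

Lemma inYN q : inY p i K q -> inY p i K (- q).
Proof.
move=> [u [v [hu hv he]]].
exists (- u), (- v); split; [exact: polyKN | exact: polyKN |].
rewrite /eqFG in he *.
have -> : - q - (- u * Phi p + - v * ('X - 1) ^+ i) =
   (-1) * (q - (u * Phi p + v * ('X - 1) ^+ i)) by ring.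
exact: dvdp_mull.
Qed.

Lemma inYB q q' : inY p i K q -> inY p i K q' -> inY p i K (q - q').
Proof. by move=> h h'; apply: inYD => //; apply: inYN. Qed.

Lemma inYC c : K c -> inY p i K (c%:P * Phi p).
Proof.
move=> hc; exists c%:P, 0; split; [exact: polyKC | exact: polyK0 |].
by rewrite /eqFG mul0r addr0 subrr dvdp0.
Qed.

Lemma inY0 : inY p i K 0.
Proof. by have := @inYC 0 K0; rewrite polyC0 mul0r. Qed.

End Closure.

Definition fsum (F : fieldType) (n B : nat) (P : {poly F}) : F :=
  \sum_(k < B) P`_(k * n).
Arguments fsum {F} n B P.

Lemma fsumB (F : fieldType) n B (P P' : {poly F}) :
  fsum n B (P - P') = fsum n B P - fsum n B P'.
Proof. by rewrite /fsum -sumrB; apply: eq_bigr => k _; rewrite coefB. Qed.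

Lemma fsum_XnM (F : fieldType) n B (Q : {poly F}) : (0 < n)%N ->
  fsum n B.+1 ('X^n * Q) = fsum n B Q.
Proof.
move=> n0; rewrite /fsum big_ord_recl /= coefXnM mul0n n0 add0r.
apply: eq_bigr => k _; rewrite coefXnM /bump /= add1n mulSn.
by rewrite ltnNge leq_addr /= addKn.
Qed.

Lemma fsum_mulXn1 (F : fieldType) n (Q : {poly F}) : (0 < n)%N ->
  fsum n (size Q).+1 (Q * ('X^n - 1)) = 0.
Proof.
move=> n0; rewrite mulrBr mulr1 fsumB mulrC fsum_XnM //.
rewrite /fsum big_ord_recr /= nth_default ?addr0 ?subrr //.
by rewrite leq_pmulr.
Qed.

Lemma coef_Phi (F : fieldType) n j : (Phi n : {poly F})`_j = (j < n)%N%:R.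
Proof.
rewrite /Phi coef_sum.
under eq_bigr => k _ do rewrite coefXn.
case: (ltnP j n) => hj.
  rewrite (bigD1 (Ordinal hj)) //= eqxx big1 ?addr0 // => k hk.
  by case: eqP => // hjk; move: hk; rewrite -(inj_eq val_inj) /= -hjk eqxx.
by rewrite big1 // => k _; case: eqP => // hjk; move: (ltn_ord k); rewrite -hjk ltnNge hj.
Qed.

Lemma fsum_CPhi (F : fieldType) n B (c : F) : (0 < n)%N ->
  fsum n B.+1 (c%:P * Phi n) = c.
Proof.
move=> n0; rewrite /fsum big_ord_recl /= coefCM coef_Phi mul0n n0 mulr1 big1 ?addr0 //.
move=> k _; rewrite coefCM coef_Phi /bump /= add1n mulSn ltnNge leq_addr /=.
by rewrite mulr0.
Qed.

Lemma fsum_K (F : fieldType) (K : pred F) n B P : subring_of K -> polyK K P -> K (fsum n B P).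
Proof. by move=> hS hP; rewrite /fsum; apply: Ksum => // k _. Qed.

Lemma cN_K (F : fieldType) (K : pred F) (p i : nat) (c : F) : subring_of K -> (0 < p)%N ->
  inY p i K (c%:P * Phi (p ^ 2)) -> K c.
Proof.
move=> hS p0 [u [v [hu hv /dvdpP [Q hQ]]]].
have n0 : (0 < p ^ 2)%N by rewrite expn_gt0 p0.
have := fsum_mulXn1 Q n0; rewrite -hQ fsumB fsum_CPhi // => /eqP; rewrite subr_eq0 => /eqP->.
apply: fsum_K => //; apply: (polyKD hS); apply: (polyKM hS) => //;
  [exact: (polyKPhi hS) | exact: (polyKt hS)].
Qed.

Lemma Xn_mod (F : fieldType) n m : (('X^n - 1 : {poly F}) %| 'X^m - 'X^(m %% n)).
Proof.
rewrite {1}(divn_eq m n) exprD mulnC exprM.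
have -> : ('X^n) ^+ (m %/ n) * 'X^(m %% n) - 'X^(m %% n) =
  (('X^n : {poly F}) ^+ (m %/ n) - 1) * 'X^(m %% n) by ring.
rewrite (subrX1 ('X^n) (m %/ n)) -mulrA. apply: dvdp_mulr. exact: dvdpp.
Qed.



Unset Implicit Arguments.
Theorem lemma9 (p : nat) (F : fieldType) (K : pred F) (i : nat)
    (T : 'Z_(p ^ 2) -> {poly F}) :
  prime p ->
  is_Zloc_p p K \/ is_Zp p K ->
  (i <= p.-1)%N ->
  is_cocycle p i K T ->
  exists u : 'Z_(p ^ 2) * {poly F}, in_crys p i K T u /\ crys_order p u p.
Proof.
move=> pp hK _ [hF hc].
have hS : subring_of K by case: hK => [h|[]] //; exact: (Zloc_subring pp h).
have p1 := prime_gt1 pp.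
have p0 : (0 < p)%N by apply: ltnW.
have n1 : (1 < p ^ 2)%N by rewrite -mulnn (ltn_trans p1) // ltn_Pmull.
pose g (m : nat) : 'Z_(p ^ 2) := m%:R.
have gv m : g m = (m %% p ^ 2)%N :> nat by rewrite /g val_Zp_nat.
have T0 : inY p i K (T 0).
  have := hc 0 0; rewrite addr0 /= expr0 mul1r.
  have -> : T 0 - (T 0 + T 0) = - T 0 by ring.
  by move/(inYN hS); rewrite opprK.
set T1 := T 1.
have hind m : inY p i K (T (g m) - Phi m * T1).
  elim: m => [|m ih].
    have -> : g 0 = 0 by [].
    by rewrite /Phi big_ord0 mul0r subr0.
  have hg : g m.+1 = g m + 1 by rewrite /g mulrSr.
  have := hc (g m) 1; rewrite -hg => hA.
  apply: (inY_eq (inYD hS hA ih)).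
  rewrite /eqFG /Phi big_ord_recr /= -/(Phi m) -/T1.
  have -> : T (g m.+1) - ('X^(g m) * T1 + T (g m)) + (T (g m) - Phi m * T1) -
     (T (g m.+1) - (Phi m + 'X^m) * T1) = ('X^m - 'X^(g m)) * T1 by ring.
  by apply: dvdp_mulr; rewrite gv; apply: Xn_mod.
pose c := T1.[1].
have hN : inY p i K (Phi (p ^ 2)%N * T1).
  have gn : g (p ^ 2)%N = 0 by apply: val_inj; rewrite /= gv modnn.
  have := inYB hS T0 (hind (p ^ 2)%N); rewrite gn.
  by have -> : T 0 - (T 0 - Phi (p ^ 2)%N * T1) = Phi (p ^ 2)%N * T1 by ring.
have [q hq] : exists q, T1 - c%:P = q * ('X - 1).
  have : root (T1 - c%:P) 1 by rewrite /root hornerD hornerN hornerC subrr.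
  by case/factor_theorem => q hq; exists q; rewrite hq polyC1.
have hc_K : K c.
  apply: (cN_K hS p0); apply: (inY_eq hN).
  rewrite /eqFG.
  have -> : Phi (p ^ 2)%N * T1 - c%:P * Phi (p ^ 2)%N = q * (('X - 1) * Phi (p ^ 2)%N).
    by rewrite -[T1](subrK c%:P) hq; ring.
  by rewrite /Phi -subrX1; apply: dvdp_mull.
pose x := Phi p * (T1 - c%:P).
have gpv : g p = p :> nat by rewrite gv modn_small // -mulnn ltn_Pmull.
have hexp k : crys_exp p (g p, x) k = (g p *+ k, (\sum_(j < k) 'X^(p * j)) * x).
  elim: k => [|k ih]; first by rewrite /crys_exp /= big_ord0 mul0r.
  rewrite /crys_exp iterS -/(crys_exp p (g p, x) k) ih /crys_mul /= gpv.
  rewrite mulrSr big_ord_recl /= muln0 expr0; congr (_, _).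
  rewrite mulrA mulr_sumr mulrDl mul1r addrC; congr (_ + _); congr (_ * _).
  by apply: eq_bigr => j _; rewrite -exprD /bump /= add1n mulnS.
have gpk k : g p *+ k = g (p * k)%N by rewrite /g -mulrnA.
exists (g p, x); split.
  split.
    exists (T1 - c%:P), 0; rewrite /eqFG /= mul0r addr0 /x mulrC subrr.
    exact: dvdp0.
  rewrite /=.
  have := inYB hS (inYN hS (hind p)) (inYC hS p i hc_K).
  by have -> : - (T (g p) - Phi p * T1) - c%:P * Phi p = x - T (g p) by rewrite /x; ring.
split.
  rewrite hexp /crys_eq /crys_one /=; split.
    by apply: val_inj; rewrite gpk /= gv mulnn modnn.
  rewrite /eqFG subr0 /x hq.
  have e1 : ('X^p - 1 : {poly F}) = ('X - 1) * Phi p by rewrite /Phi subrX1.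
  have e2 : ('X^(p ^ 2)%N%N - 1 : {poly F}) = ('X^p - 1) * \sum_(j < p) 'X^(p * j).
    rewrite -mulnn exprM subrX1; congr (_ * _).
    by apply: eq_bigr => j _; rewrite exprM.
  have -> : (\sum_(j < p) 'X^(p * j)) * (Phi p * (q * ('X - 1))) =
     q * ((('X - 1) * Phi p) * (\sum_(j < p) 'X^(p * j))) by ring.
  by rewrite -e1 -e2; apply: dvdp_mull.
move=> k /andP [k0 kp]; rewrite hexp /crys_eq /crys_one /= => [[h _]].
have := congr1 val h; rewrite gpk /= gv modn_small.
  by move=> /eqP; rewrite muln_eq0 (negPf (lt0n_neq0 p0)) (negPf (lt0n_neq0 k0)).
by rewrite -mulnn ltn_pmul2l.
Qed.
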